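(* Let $S$ be an entropy function for a finite set $X$. Given functions $\mu,\nu:2^X\to[0,\infty)$, there exist subsets $A_1\subset\cdots\subset A_m$ and $B_1\subset\cdots\subset B_n$ of $X$ with $A_m\cap B_n=\emptyset$, and functions $\mu',\nu':2^X\to[0,\infty)$ supported on $\{A_1,\dots,A_m\}$ and $\{B_1,\dots,B_n\}$ respectively, such that $\phi_{\mu'}-\phi_{\nu'}=\phi_\mu-\phi_\nu$ and \[\sum_{A\subseteq X}(\mu'(A)+\nu'(A))S(A)\le\sum_{A\subseteq X}(\mu(A)+\nu(A))S(A).\]
   Context: An entropy function for a finite set $X$ is a function $S:2^X\to[0,\infty)$ with $S(\emptyset)=0$, $S(A)+S(B)\ge S(A\cap B)+S(A\cup B)$ and $S(A)+S(B)\ge S(A\setminus B)+S(B\setminus A)$ for all $A,B\subseteq X$. For $\mu:2^X\to\mathbb R$, $\phi_\mu:X\to\mathbb R$ is defined by $\phi_\mu(x):=\sum_{A\ni x}\mu(A)$. *)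

(* Defs.v *)
From HB Require Import structures.
From mathcomp Require Import all_boot all_order all_algebra.
Set Implicit Arguments. Unset Strict Implicit. Unset Printing Implicit Defensive.
Import Order.TTheory GRing.Theory Num.Theory.
Local Open Scope ring_scope.

Definition entropy_function (R : realFieldType) (X : finType)
  (S : {set X} -> R) : Prop :=
  [/\ forall A, 0 <= S A,
      S set0 = 0,
      forall A B, S (A :&: B) + S (A :|: B) <= S A + S B
    & forall A B, S (A :\: B) + S (B :\: A) <= S A + S B].

Definition phi (R : realFieldType) (X : finType) (mu : {set X} -> R) (x : X) : R :=
  \sum_(A : {set X} | x \in A) mu A.

Definition is_chain (X : finType) (s : seq {set X}) : Prop :=
  sorted (fun A B : {set X} => A \proper B) s.

Definition supported_on (R : realFieldType) (X : finType)
  (mu : {set X} -> R) (s : seq {set X}) : Prop :=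
  forall A, mu A != 0 -> A \in s.

(* Main.v *)
Require Import Defs.
From HB Require Import structures.
From mathcomp Require Import all_boot all_order all_algebra.
From mathcomp Require Import ring lra.
Import Order.TTheory GRing.Theory Num.Theory.
Local Open Scope ring_scope.
Set Implicit Arguments. Unset Strict Implicit. Unset Printing Implicit Defensive.


Section Ys.
Variables (R : realFieldType) (X : finType) (S : {set X} -> R).

Definition pre (s : seq X) (i : nat) : {set X} := [set w in take i s].

Definition ys (s : seq X) (x : X) : R :=
  if x \in s then S (pre s (index x s).+1) - S (pre s (index x s)) else 0.

Lemma ys_rcons s z x : uniq (rcons s z) ->
  ys (rcons s z) x = ys s x +
   (if x == z then S [set w in rcons s z] - S [set w in s] else 0).
Proof.
rewrite rcons_uniq => /andP [zs us].
rewrite /ys /pre mem_rcons in_cons -cats1 index_cat.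
case: (x =P z) => [->|nxz] /=.
  rewrite (negbTE zs) /= eqxx addn0 (take_size_cat _ (erefl (size s))).
  rewrite take_oversize; last by rewrite size_cat /= addn1.
  by rewrite add0r.
case xs: (x \in s); last by rewrite addr0.
have hi := index_mem x s; rewrite xs in hi.
by rewrite !takel_cat // ?addr0 // ltnW.
Qed.

Lemma pre0 : pre [::] 0 = set0.
Proof. by apply/setP => w; rewrite !inE. Qed.

Lemma sum_ys_rcons s z (A : {set X}) : uniq (rcons s z) ->
  \sum_(x in A) ys (rcons s z) x = \sum_(x in A) ys s x +
   (if z \in A then S [set w in rcons s z] - S [set w in s] else 0).
Proof.
move=> u; rewrite (eq_bigr _ (fun x _ => ys_rcons x u)) big_split /=; congr (_ + _).
case: ifP => zA.
  rewrite (bigD1 z) //= eqxx big1 ?addr0 // => x /andP [_ /negbTE ->] //.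
by rewrite big1 // => x xA; case: eqP => // exz; rewrite -exz xA in zA.
Qed.

Lemma sum_ys_all s : uniq s -> \sum_x ys s x = S [set w in s] - S set0.
Proof.
elim/last_ind: s => [|s z IH] u.
  rewrite big1; last by move=> x _; rewrite /ys in_nil.
  by rewrite (_ : [set w in [::]] = set0) ?subrr //; apply/setP => w; rewrite !inE.
have u' : uniq s by move: u; rewrite rcons_uniq => /andP [].
rewrite (eq_bigr _ (fun x _ => ys_rcons x u)) big_split /= IH //.
rewrite -big_mkcond big_pred1_eq; lra.
Qed.


Lemma sum_ys_le (S0 : S set0 = 0)
  (hsub : forall A B, S (A :&: B) + S (A :|: B) <= S A + S B) s (A : {set X}) :
  uniq s -> \sum_(x in A) ys s x <= S (A :&: [set w in s]).
Proof.
elim/last_ind: s => [|s z IH] u.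
  rewrite big1; last by move=> x _; rewrite /ys in_nil.
  by rewrite (_ : _ :&: _ = set0) ?S0 //; apply/setP => w; rewrite !inE andbF.
have u' : uniq s by move: u; rewrite rcons_uniq => /andP [].
have zs : z \notin s by move: u; rewrite rcons_uniq => /andP [].
rewrite sum_ys_rcons //.
case: ifP => zA; last first.
  rewrite addr0 (_ : A :&: [set w in rcons s z] = A :&: [set w in s]) ?IH //.
  by apply/setP => y0; rewrite !inE ?mem_rcons ?in_cons;
  case: (y0 =P z) => [->|_]; rewrite ?(negbTE zs) ?zA ?eqxx /=; do ?case: (_ \in _).
have E1 : (A :&: [set w in s] :|: [set z]) :&: [set w in s] = A :&: [set w in s].
  by apply/setP => y0; rewrite !inE ?mem_rcons ?in_cons;
  case: (y0 =P z) => [->|_]; rewrite ?(negbTE zs) ?zA ?eqxx /=; do ?case: (_ \in _).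
have E2 : (A :&: [set w in s] :|: [set z]) :|: [set w in s] = [set w in rcons s z].
  by apply/setP => y0; rewrite !inE ?mem_rcons ?in_cons;
  case: (y0 =P z) => [->|_]; rewrite ?(negbTE zs) ?zA ?eqxx /=; do ?case: (_ \in _).
have E3 : A :&: [set w in rcons s z] = (A :&: [set w in s]) :|: [set z].
  by apply/setP => y0; rewrite !inE ?mem_rcons ?in_cons;
  case: (y0 =P z) => [->|_]; rewrite ?(negbTE zs) ?zA ?eqxx /=; do ?case: (_ \in _).
have := hsub ((A :&: [set w in s]) :|: [set z]) [set w in s].
rewrite E1 E2 E3.
have := IH u'. lra.
Qed.

End Ys.


Section Chain.
Variables (R : realFieldType) (X : finType).

Definition wt (a : X -> R) (s : seq X) (i : nat) : R :=
  nth 0 (map a s) i - nth 0 (map a s) i.+1.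

Definition cmu (a : X -> R) (s : seq X) (A : {set X}) : R :=
  \sum_(i < size s) (if A == pre s i.+1 then wt a s i else 0).

Definition chain (s : seq X) := [seq pre s i.+1 | i <- iota 0 (size s)].

Lemma sum_if_eq (P : {set X}) (w : R) (x : X) :
  \sum_(A : {set X} | x \in A) (if A == P then w else 0) = if x \in P then w else 0.
Proof.
rewrite big_mkcond /= (bigD1 P) //= eqxx big1 ?addr0 // => A /negbTE ->.
by case: ifP.
Qed.

Lemma phi_cmu a s x : uniq s -> phi (cmu a s) x = if x \in s then a x else 0.
Proof.
move=> us; rewrite /phi /cmu exchange_big /=.
rewrite (eq_bigr (fun i : 'I_(size s) => if x \in pre s i.+1 then wt a s i else 0));
  last by move=> i _; rewrite sum_if_eq.
case xs: (x \in s); last first.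
  by rewrite big1 // => i _; rewrite inE; case: ifP => // /mem_take; rewrite xs.
have jk : (index x s < size s)%N by rewrite index_mem.
rewrite -(big_mkord xpredT (fun i => if x \in pre s i.+1 then wt a s i else 0)).
rewrite (@big_cat_nat _ _ _ (index x s) 0 (size s) _ _ (leq0n _) (ltnW jk)) /=.
rewrite big_nat big1 ?add0r; last first.
  by move=> i /andP [_ ij]; rewrite inE in_take // ltnS leqNgt ij.
rewrite (eq_big_nat _ _ (F2 := fun i => - (nth 0 (map a s) i.+1 - nth 0 (map a s) i))); last first.
  by move=> i /andP [ji _]; rewrite inE in_take // ltnS ji /wt opprB.
rewrite sumrN telescope_sumr ?(ltnW jk) // nth_default ?size_map //.
by rewrite (nth_map x) // nth_index // sub0r opprK.
Qed.

Lemma wt_ge0 a s : sorted (fun x y => a y <= a x) s -> (forall x, x \in s -> 0 <= a x) ->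
  forall i, (i < size s)%N -> 0 <= wt a s i.
Proof.
move=> srt pos i ik.
have [x0 _] : exists x0 : X, true by case: s ik {srt pos} => [//|y s'] _; exists y.
rewrite /wt (nth_map x0) //.
case: (ltnP i.+1 (size s)) => h.
  by rewrite (nth_map x0) // subr_ge0; exact: (sortedP x0 srt) i h.
by rewrite (nth_default (0:R)) ?size_map // subr0 pos // mem_nth.
Qed.

Lemma cmu_ge0 a s : sorted (fun x y => a y <= a x) s -> (forall x, x \in s -> 0 <= a x) ->
  forall A, 0 <= cmu a s A.
Proof.
move=> srt pos A; apply: sumr_ge0 => i _; case: ifP => // _.
exact: wt_ge0.
Qed.

Lemma cmu_supp a s : supported_on (cmu a s) (chain s).
Proof.
move=> A; apply: contraR => nA; rewrite /cmu big1 // => i _.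
case: eqP => // eA; rewrite eA in nA; case/negP: nA.
by apply/mapP; exists (val i) => //; rewrite mem_iota /= add0n.
Qed.

Lemma chain_sorted s : uniq s -> is_chain (chain s).
Proof.
move=> us; rewrite /is_chain.
apply: (homo_sorted_in (P := [pred i | (i < size s)%N]) (e := ltn)); last first.
- exact: iota_ltn_sorted.
- by apply/allP => i; rewrite mem_iota inE.
move=> i j ii jj ij; move: ii jj; rewrite !inE => ik jk.
have [x0 _] : exists x0 : X, true by case: s ik {us jk} => [//|y s'] _; exists y.
apply/properP; split.
  apply/subsetP => y; rewrite !inE => yi.
  have ys := mem_take yi.
  rewrite in_take //; rewrite in_take // in yi; apply: leq_trans yi _; by rewrite ltnS ltnW.
exists (nth x0 s j); rewrite !inE in_take ?mem_nth // index_uniq //.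
by rewrite ltnS -ltnNge.
Qed.

Lemma chain_last s : last set0 (chain s) \subset [set w in s].
Proof.
have := mem_last set0 (chain s); rewrite in_cons => /orP [/eqP ->|]; first exact: sub0set.
case/mapP => i _ ->; apply/subsetP => y; rewrite !inE; exact: mem_take.
Qed.

Lemma abel (f g : nat -> R) n :
  \sum_(i < n) (f i - f i.+1) * g i.+1 =
  \sum_(i < n) f i * (g i.+1 - g i) + f 0%N * g 0%N - f n * g n.
Proof.
elim: n => [|n IH]; first by rewrite !big_ord0; lra.
rewrite !big_ord_recr /= IH; lra.
Qed.

Lemma cost_cmu (S : {set X} -> R) (S0 : S set0 = 0) a s : uniq s ->
  \sum_A cmu a s A * S A = \sum_x a x * ys S s x.
Proof.
move=> us.
rewrite (eq_bigr (fun A => \sum_(i < size s) (if A == pre s i.+1 then wt a s i else 0) * S A));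
  last by move=> A _; rewrite /cmu mulr_suml.
rewrite exchange_big /=.
rewrite (eq_bigr (fun i : 'I_(size s) => wt a s i * S (pre s i.+1))); last first.
  move=> i _; rewrite (bigD1 (pre s i.+1)) //= eqxx big1 ?addr0 // => A /negbTE ->.
  by rewrite mul0r.
rewrite (abel (fun i => nth 0 (map a s) i) (fun i => S (pre s i))).
rewrite (@nth_default _ (0:R) (map a s) (size s)) ?size_map // mul0r subr0.
rewrite (_ : pre s 0 = set0) ?S0 ?mulr0 ?addr0; last by apply/setP => y; rewrite /pre take0 !inE.
rewrite [RHS](bigID (mem s)) /= [X in _ + X]big1 ?addr0; last first.
  by move=> x /negbTE xs; rewrite /ys xs mulr0.
case: s us => [|x0 s'] us.
  by rewrite big_ord0 big1 // => x; rewrite in_nil.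
rewrite -big_uniq // (big_nth x0) big_mkord.
apply: eq_bigr => i _.
rewrite (nth_map x0) // /ys mem_nth // index_uniq //.
Qed.

End Chain.


Lemma bound_Y (R : realFieldType) (X : finType) (S : {set X} -> R)
  (hS : entropy_function S) (sP sN : seq X) (A : {set X}) :
  uniq sP -> uniq sN -> [set w in sP] = ~: [set w in sN] ->
  \sum_(x in A) ys S sP x - \sum_(x in A) ys S sN x <= S A.
Proof.
case: hS => _ S0 hsub hpos uP uN eP.
have h1 := sum_ys_le S0 hsub A uP.
have h2 := sum_ys_le S0 hsub (~: A) uN.
have h3 := sum_ys_all S uN.
rewrite (bigID (mem A)) /= in h3.
have e3 : \sum_(i | i \notin A) ys S sN i = \sum_(i in ~: A) ys S sN i by apply: eq_bigl => x; rewrite inE.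
rewrite e3 in h3.
have h4 := hpos A [set w in sN].
rewrite (_ : A :\: [set w in sN] = A :&: [set w in sP]) in h4; last by rewrite eP setDE.
rewrite (_ : [set w in sN] :\: A = ~: A :&: [set w in sN]) in h4; last by rewrite setDE setIC.
rewrite S0 in h3.
lra.
Qed.

Lemma sum_phi (R : realFieldType) (X : finType) (m : {set X} -> R) (Y : X -> R) :
  \sum_x phi m x * Y x = \sum_A m A * \sum_(x in A) Y x.
Proof.
rewrite /phi.
rewrite (eq_bigr (fun x : X => \sum_(A : {set X}) (if x \in A then m A * Y x else 0))); last first.
  by move=> x _; rewrite mulr_suml big_mkcond.
rewrite exchange_big /=; apply: eq_bigr => A _.
by rewrite -big_mkcond mulr_sumr.
Qed.

Theorem corollary32 (R : realFieldType) (X : finType) (S : {set X} -> R)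
  (hS : entropy_function S) (mu nu : {set X} -> R)
  (hmu : forall A, 0 <= mu A) (hnu : forall A, 0 <= nu A) :
  exists (sA sB : seq {set X}) (mu' nu' : {set X} -> R),
    (is_chain sA /\ is_chain sB) /\ [/\ last set0 sA :&: last set0 sB = set0,
        (forall A, 0 <= mu' A) /\ (forall A, 0 <= nu' A),
        supported_on mu' sA /\ supported_on nu' sB,
        (forall x, phi mu' x - phi nu' x = phi mu x - phi nu x)
      & \sum_(A : {set X}) (mu' A + nu' A) * S A
          <= \sum_(A : {set X}) (mu A + nu A) * S A].
Proof.
have S0 : S set0 = 0 by case: hS.
pose g x := phi mu x - phi nu x.
pose ng x := - g x.
pose sp := sort (fun x y => g y <= g x) [seq x <- enum X | 0 <= g x].
pose sn := sort (fun x y => ng y <= ng x) [seq x <- enum X | g x < 0].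
have usp : uniq sp by rewrite sort_uniq filter_uniq ?enum_uniq.
have usn : uniq sn by rewrite sort_uniq filter_uniq ?enum_uniq.
have msp x : (x \in sp) = (0 <= g x) by rewrite mem_sort mem_filter mem_enum andbT.
have msn x : (x \in sn) = (g x < 0) by rewrite mem_sort mem_filter mem_enum andbT.
have ssp : sorted (fun x y => g y <= g x) sp.
  by apply: sort_sorted => x y; exact: le_total.
have ssn : sorted (fun x y => ng y <= ng x) sn.
  by apply: sort_sorted => x y; exact: le_total.
have ePN : [set w in sp] = ~: [set w in sn].
  by apply/setP => y; rewrite !inE msp msn leNgt.
have eNP : [set w in sn] = ~: [set w in sp] by rewrite ePN setCK.
exists (chain sp), (chain sn), (cmu g sp), (cmu ng sn).
split; first by split; apply: chain_sorted.
split.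
- apply/setP => y; rewrite !inE; apply/negP => /andP [h1 h2].
  have := subsetP (chain_last sp) y h1; have := subsetP (chain_last sn) y h2.
  rewrite !inE msp msn => a b; lra.
- split; apply: cmu_ge0 => // x; rewrite ?msp ?msn // /ng oppr_ge0; exact: ltW.
- by split; apply: cmu_supp.
- move=> x; rewrite !phi_cmu // msp msn ltNge.
  by case: (0 <= g x) => /=; rewrite ?subr0 ?sub0r /ng ?opprK.
rewrite (eq_bigr (fun A => cmu g sp A * S A + cmu ng sn A * S A)); last first.
  by move=> A _; rewrite mulrDl.
rewrite big_split /= !cost_cmu //.
pose Y x := ys S sp x - ys S sn x.
have -> : \sum_x g x * ys S sp x + \sum_x ng x * ys S sn x
   = \sum_x phi mu x * Y x - \sum_x phi nu x * Y x.
  rewrite -big_split -sumrB /=; apply: eq_bigr => x _; rewrite /ng /g /Y; ring.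
rewrite !sum_phi -sumrB; apply: ler_sum => A _.
rewrite mulrDl; apply: lerD.
  apply: ler_wpM2l => //; rewrite /Y sumrB; exact: bound_Y.
rewrite -mulrN; apply: ler_wpM2l => //; rewrite /Y sumrB opprB; exact: bound_Y.
Qed.
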